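(* Consider an open chain of $M$ sites, each site $m$ carrying one spinless fermion mode (operators $c_m, c_m^\dagger$ with $\{c_m,c_{m'}^\dagger\}=\delta_{m,m'}$) and one spin-$1/2$. Let $\gamma_m, J_m$ be real numbers with $\gamma_m\neq 0$, and for $1\le m\le M$ define $$\hat h_m^{(L)} = -\gamma_{m-1}c_{m-1}^\dagger c_m + J_{m-1}c_{m-1}^\dagger c_m\sigma_m^-,\qquad \hat h_m^{(R)} = -\gamma_m c_{m+1}^\dagger c_m + J_m c_{m+1}^\dagger c_m \sigma_{m+1}^+,$$ with $\hat h_1^{(L)}=\hat h_M^{(R)}=0$. Fix $Q$ with $1\le Q\le M-2$. Let $|\xi\rangle$ be a state with exactly $Q$ fermions, of the form $|\xi\rangle = c_{f_Q}^\dagger\cdots c_{f_1}^\dagger|\Omega\rangle\otimes|s_1\rangle\otimes\cdots\otimes|s_M\rangle$ with $f_1<\dots<f_Q$, and suppose there is $q\in\{1,\dots,Q\}$ with $f_q\le M-2$ such that sites $f_q+1$ and $f_q+2$ are unoccupied. Then there exist spin states $|s'_{f_q+1}\rangle, |s'_{f_q+2}\rangle$ such that the state $|\xi'\rangle$, obtained from $|\xi\rangle$ by replacing $c_{f_q}^\dagger$ by $c_{f_q+2}^\dagger$ (all other fermion positions unchanged) and replacing $|s_{f_q+1}\rangle,|s_{f_q+2}\rangle$ by $|s'_{f_q+1}\rangle,|s'_{f_q+2}\rangle$ (all other spins unchanged), satisfies $$\hat h_{f_q}^{(R)}|\xi\rangle + \hat h_{f_q+2}^{(L)}|\xi'\rangle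 = 0.$$
   Context: $|\Omega\rangle$ is the fermion vacuum. For the spin on site $m$, $\sigma_m^{x,y,z}$ are Pauli matrices, $\sigma_m^{\pm}=\sigma_m^x\pm i\sigma_m^y$ (so $\sigma^+$ raises and $\sigma^-$ lowers $\sigma^z$). Fermion operators act on the fermionic factor and spin operators on the spin factors of the tensor product. *)

(* Defs.v *)
From HB Require Import structures.
From mathcomp Require Import all_boot all_order all_algebra.
Set Implicit Arguments. Unset Strict Implicit. Unset Printing Implicit Defensive.
Import Order.TTheory GRing.Theory Num.Theory.
Local Open Scope ring_scope.

Section Chain.
Variables (C : numClosedFieldType) (M : nat).

(* Basis configurations of the tensor product (Fock space of M fermion modes)
   (x) (C^2)^{(x) M}: a configuration is (occupation numbers, spins),
   with spin [true] = up (sigma^z = +1), [false] = down. Site m (1 <= m <= M)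
   corresponds to the ordinal m-1. *)
Definition cfg := ({ffun 'I_M -> bool} * {ffun 'I_M -> bool})%type.

Local Notation state := {ffun cfg -> C}.

Local Notation spin := {ffun bool -> C}.

Definition upd (b : bool) (i : 'I_M) (g : {ffun 'I_M -> bool}) : {ffun 'I_M -> bool} :=
  [ffun k => if k == i then b else g k].

(* Jordan-Wigner sign (-1)^{number of occupied modes before i}. *)
Definition jw (n : {ffun 'I_M -> bool}) (i : 'I_M) : C :=
  (-1) ^+ #|[set k : 'I_M | (k < i)%N && n k]|.

(* c_i^dagger |n> = jw n i |n + e_i> if n_i = 0, and 0 otherwise. *)
Definition cdagI (i : 'I_M) (v : state) : state :=
  [ffun y : cfg => if y.1 i then jw y.1 i * v (upd false i y.1, y.2) else 0].
(* c_i |n> = jw n i |n - e_i> if n_i = 1, and 0 otherwise. *)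
Definition cI (i : 'I_M) (v : state) : state :=
  [ffun y : cfg => if y.1 i then 0 else jw y.1 i * v (upd true i y.1, y.2)].
Definition sxI (i : 'I_M) (v : state) : state :=
  [ffun y : cfg => v (y.1, upd (~~ y.2 i) i y.2)].
Definition syI (i : 'I_M) (v : state) : state :=
  [ffun y : cfg => (if y.2 i then - 'i else 'i) * v (y.1, upd (~~ y.2 i) i y.2)].

Definition site (m : nat) : option 'I_M :=
  if m is m'.+1 then insub m' else None.

Definition on_site (F : 'I_M -> state -> state) (m : nat) (v : state) : state :=
  if site m is Some i then F i v else 0.

Definition cdag := on_site cdagI.
Definition c := on_site cI.
Definition sigx := on_site sxI.
Definition sigy := on_site syI.
Definition sc (k : C) (v : state) : state := [ffun y => k * v y].

Definition sigp (m : nat) (v : state) : state := sigx m v + sc 'i (sigy m v).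
Definition sigm (m : nat) (v : state) : state := sigx m v - sc 'i (sigy m v).

Variables (gam J : nat -> C).

Definition hL (m : nat) (v : state) : state :=
  if m == 1%N then 0 else
  sc (- gam m.-1) (cdag m.-1 (c m v)) + sc (J m.-1) (cdag m.-1 (c m (sigm m v))).

Definition hR (m : nat) (v : state) : state :=
  if m == M then 0 else
  sc (- gam m) (cdag m.+1 (c m v)) + sc (J m) (cdag m.+1 (c m (sigp m.+1 v))).

(* |Omega> (x) |s_1> (x) ... (x) |s_M> *)
Definition vac_spins (s : nat -> spin) : state :=
  [ffun y : cfg => if y.1 == [ffun => false] then \prod_(i < M) s i.+1 (y.2 i) else 0].

(* c^dag_{f_Q} ... c^dag_{f_1} |Omega> (x) |s_1> ... |s_M>, for f = [:: f_1; ...; f_Q] *)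
Definition xi (f : seq nat) (s : nat -> spin) : state :=
  foldl (fun v m => cdag m v) (vac_spins s) f.

End Chain.

Arguments hL {C} M gam J m v.
Arguments hR {C} M gam J m v.
Arguments xi {C} M f s.

(* Main.v *)
Require Import Defs.
From HB Require Import structures.
From mathcomp Require Import all_boot all_order all_algebra.
From mathcomp Require Import ring zify.
Import Order.TTheory GRing.Theory Num.Theory.
Local Open Scope ring_scope.

Section Aux.
Variables (C : numClosedFieldType) (M : nat).
Local Notation state := {ffun cfg M -> C}.

Lemma on_siteS (F : 'I_M -> state -> state) (i : 'I_M) v : on_site F i.+1 v = F i v.
Proof. by rewrite /on_site /site valK. Qed.

Definition mk (P : {ffun 'I_M -> bool}) (G : {ffun 'I_M -> bool} -> C) : state :=
  [ffun y => if y.1 == P then G y.2 else 0].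
Definition occ (f : seq nat) : {ffun 'I_M -> bool} := [ffun k : 'I_M => (k.+1 \in f)].
Definition T (s : nat -> {ffun bool -> C}) (g : {ffun 'I_M -> bool}) : C :=
  \prod_(i < M) s i.+1 (g i).
Definition tri n := (\sum_(j < n) j)%N.

Lemma card_occ f : uniq f -> all (fun m => 0 < m <= M)%N f ->
  #|[set k : 'I_M | k.+1 \in f]| = size f.
Proof.
move=> uf af; rewrite cardE.
have pe : perm_eq [seq (val k).+1 | k <- enum [set k : 'I_M | k.+1 \in f]] f.
  apply: uniq_perm => //.
    rewrite map_inj_uniq ?enum_uniq // => a b /= [] /val_inj //.
  move=> x; apply/mapP/idP => [[k]|xf].
    by rewrite mem_enum inE => kf ->.
  move/allP: af => /(_ x xf) /andP[x0 xM].
  have xM' : (x.-1 < M)%N by rewrite prednK.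
  exists (Ordinal xM'); rewrite ?mem_enum ?inE /= prednK //.
by rewrite -(perm_size pe) size_map.
Qed.


Lemma jw_rcons f (i : 'I_M) : uniq f -> all (fun m => 0 < m <= M)%N f ->
  all (ltn^~ i.+1) f -> jw C (occ (rcons f i.+1)) i = (-1) ^+ size f.
Proof.
move=> uf af lf; rewrite /jw -(card_occ f uf af); congr (_ ^+ _).
apply: eq_card => k; rewrite !inE ffunE mem_rcons in_cons.
case: (ltnP k i) => ki /=.
  by rewrite eqSS (ltn_eqF ki).
apply/esym/negbTE/negP => kf; move/allP: lf => /(_ _ kf).
by move=> h; move: ki; rewrite leqNgt; apply/negP/negPn; exact: h.
Qed.

Lemma xiE f s : sorted ltn f -> all (fun m => 0 < m <= M)%N f ->
  xi M f s = mk (occ f) (fun g => (-1) ^+ tri (size f) * T s g).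
Proof.
elim/last_ind: f => [|f m IH] Hs Ha.
  rewrite /xi /= /vac_spins /mk; apply/ffunP => y; rewrite !ffunE.
  have -> : occ [::] = [ffun => false] by apply/ffunP=> k; rewrite !ffunE.
  by rewrite /tri big_ord0 expr0 mul1r.
rewrite sorted_pairwise in Hs; last exact: ltn_trans.
rewrite pairwise_rcons in Hs; case/andP: Hs => Hlt Hp.
rewrite all_rcons in Ha; case/andP: Ha => /andP[m0 mM] Ha.
have uf : uniq f by apply: (sorted_uniq ltn_trans ltnn); rewrite sorted_pairwise //; exact: ltn_trans.
have [i ei] : exists i : 'I_M, m = i.+1.
  have h : (m.-1 < M)%N by rewrite prednK.
  by exists (Ordinal h); rewrite /= prednK.
subst m.
rewrite /xi foldl_rcons -/(xi M f s) /cdag on_siteS IH //; last first.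
  by rewrite sorted_pairwise //; exact: ltn_trans.
apply/ffunP => y; rewrite /cdagI /mk !ffunE.
have nif : (i.+1 \in f) = false.
  by apply/negbTE/negP => /(allP Hlt) /= h; rewrite ltnn in h.
have key : (y.1 i && (upd false i y.1 == occ f)) = (y.1 == occ (rcons f i.+1)).
  apply/andP/eqP => [[yi /eqP Hu]|->].
    apply/ffunP => k; rewrite ffunE mem_rcons in_cons.
    case: (eqVneq k i) => [->|ki]; first by rewrite yi eqxx.
    have ki' : (k.+1 == i.+1) = false by rewrite eqSS; exact: negbTE ki.
    by move/ffunP: Hu => /(_ k); rewrite !ffunE (negbTE ki) ki' => ->.
  split; first by rewrite ffunE mem_rcons mem_head.
  apply/eqP/ffunP => k; rewrite !ffunE mem_rcons in_cons.
  case: (eqVneq k i) => [->|ki]; first by rewrite nif.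
  have ki' : (k.+1 == i.+1) = false by rewrite eqSS; exact: negbTE ki.
  by rewrite ki'.
case E: (y.1 == _).
  move: (E); rewrite -key => /andP[-> ->]; move/eqP: E => ->.
  rewrite jw_rcons // size_rcons /tri big_ord_recr /= exprD; ring.
rewrite -key in E; case: (y.1 i) E => //= ->.
by rewrite mulr0.
Qed.


Lemma updE b (i : 'I_M) g k : upd b i g k = if k == i then b else g k.
Proof. by rewrite ffunE. Qed.

Lemma sqi : 'i * 'i = -1 :> C.
Proof. by rewrite -expr2 sqrCi. Qed.

Lemma sigp_mk (j : 'I_M) P G : sigp j.+1 (mk P G) =
  mk P (fun g => if g j then 2 * G (upd false j g) else 0).
Proof.
apply/ffunP => y; rewrite /sigp /sigx /sigy !on_siteS /sxI /syI /sc /mk !ffunE /=.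
case: (y.1 == P); last by rewrite !mulr0 addr0.
case: (y.2 j) => /=.
  by rewrite mulrA mulrN sqi opprK mul1r mulr2n mulrDl mul1r.
by rewrite mulrA sqi mulN1r addrN.
Qed.

Lemma sigm_mk (j : 'I_M) P G : sigm j.+1 (mk P G) =
  mk P (fun g => if g j then 0 else 2 * G (upd true j g)).
Proof.
apply/ffunP => y; rewrite /sigm /sigx /sigy !on_siteS /sxI /syI /sc /mk !ffunE /=.
case: (y.1 == P); last by rewrite !mulr0 subr0.
case: (y.2 j) => /=.
  by rewrite mulrA mulrN sqi opprK mul1r subrr.
by rewrite mulrA sqi mulN1r opprK mulr2n mulrDl mul1r.
Qed.

Lemma hop (i j : 'I_M) (P : {ffun 'I_M -> bool}) (G : {ffun 'I_M -> bool} -> C) : i != j -> P i -> ~~ P j ->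
  cdag j.+1 (c i.+1 (mk P G)) =
  mk (upd true j (upd false i P))
     (fun g => jw C (upd true j (upd false i P)) j * jw C (upd false i P) i * G g).
Proof.
move=> ij Pi Pj; rewrite /cdag /c !on_siteS.
apply/ffunP => y; rewrite /cdagI /cI /mk !ffunE /=.
set P2 := upd true j (upd false i P).
have ji : (j == i) = false by rewrite eq_sym; exact: negbTE ij.
case E: (y.1 == P2).
  move/eqP: E => ->.
  have -> : P2 j = true by rewrite updE eqxx.
  have -> : upd false j P2 = upd false i P.
    apply/ffunP => k; rewrite !updE; case: (eqVneq k j) => [->|//].
    by rewrite ji; apply/esym/negbTE.
  rewrite (negbTE ij) /P2 updE (negbTE ij) updE eqxx -/P2.
  have -> : upd true i (upd false i P) = P.
    by apply/ffunP => k; rewrite !updE; case: (eqVneq k i) => [->|].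
  by rewrite eqxx mulrA.
case Hj: (y.1 j) => //.
rewrite (negbTE ij).
case Hi: (y.1 i); first by rewrite mulr0.
case Hu: (_ == P); last by rewrite !mulr0.
exfalso; move/negbT: E; apply/negP; rewrite negbK; apply/eqP/ffunP => k.
rewrite /P2; move/eqP: Hu => <-; rewrite !updE.
case: (eqVneq k j) => [->|kj]; first by rewrite Hj.
case: (eqVneq k i) => [->|ki] //.
Qed.


Definition Rp (s : nat -> {ffun bool -> C}) (j k : 'I_M) (g : {ffun 'I_M -> bool}) : C :=
  \prod_(m < M | (m != j) && (m != k)) s m.+1 (g m).

Lemma Tsplit s (j k : 'I_M) g : j != k -> T s g = s j.+1 (g j) * s k.+1 (g k) * Rp s j k g.
Proof.
move=> jk; rewrite /T (bigD1 j) //= (bigD1 k) /=; last by rewrite eq_sym.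
by rewrite mulrA.
Qed.

Lemma Rp_updj s (j k : 'I_M) g b : Rp s j k (upd b j g) = Rp s j k g.
Proof. by apply: eq_bigr => m /andP[mj mk]; rewrite updE (negbTE mj). Qed.

Lemma Rp_updk s (j k : 'I_M) g b : Rp s j k (upd b k g) = Rp s j k g.
Proof. by apply: eq_bigr => m /andP[mj mk]; rewrite updE (negbTE mk). Qed.

Lemma Rp_ext s s' (j k : 'I_M) g :
  (forall m : 'I_M, m != j -> m != k -> s' m.+1 = s m.+1) -> Rp s' j k g = Rp s j k g.
Proof. by move=> h; apply: eq_bigr => m /andP[mj mk]; rewrite h. Qed.

Lemma neqS2 n : (n.+3 == n.+2) = false.
Proof. by elim: n. Qed.

End Aux.

Theorem lemma1 (C : numClosedFieldType) (M Q : nat) (gam J : nat -> C)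
  (s : nat -> {ffun bool -> C}) (f : seq nat) (q fq : nat) :
  (forall m, gam m \is Num.real) -> (forall m, J m \is Num.real) ->
  (forall m, (0 < m < M)%N -> gam m != 0) ->
  (1 <= Q <= M - 2)%N ->
  size f = Q -> sorted ltn f -> all (fun m => 0 < m <= M)%N f ->
  (forall m, (0 < m <= M)%N -> s m != 0) ->
  (1 <= q <= Q)%N -> fq = nth 0%N f q.-1 -> (fq <= M - 2)%N ->
  fq.+1 \notin f -> fq.+2 \notin f ->
  exists a b : {ffun bool -> C}, a != 0 /\ b != 0 /\
    hR M gam J fq (xi M f s)
    + hL M gam J fq.+2
        (xi M (set_nth 0%N f q.-1 fq.+2)
           (fun m => if m == fq.+1 then a else if m == fq.+2 then b else s m))
    = 0.
Proof.
move=> _ _ Hg HQ Hsz Hsort Hall Hs Hq Hfq HfqM Hn1 Hn2.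
have qs : (q.-1 < size f)%N by rewrite Hsz; clear -Hq; lia.
have fqin : fq \in f by rewrite Hfq mem_nth.
have /andP[fq0 fqM] := allP Hall _ fqin.
have M3 : (3 <= M)%N by clear -HQ; lia.
set f1 := take q.-1 f; set f2 := drop q f.
have ef : f = f1 ++ fq :: f2.
  have -> : f2 = drop q.-1.+1 f by rewrite prednK //; clear -Hq; lia.
  by rewrite Hfq -drop_nth // cat_take_drop.
have ef' : set_nth 0%N f q.-1 fq.+2 = f1 ++ fq.+2 :: f2.
  by rewrite set_nthE qs prednK //; clear -Hq; lia.
rewrite ef'.
have pw : pairwise ltn (f1 ++ fq :: f2) by rewrite -ef -sorted_pairwise //; exact: ltn_trans.
rewrite pairwise_cat pairwise_cons allrel_consr in pw.
case/and3P: pw => /andP[a1 r12] p1 /andP[a2 p2].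
clearbody f1 f2; subst f; clear Hfq ef' qs Hsort.
have nf1 : forall x, x \in f1 -> (x < fq)%N by move=> x /(allP a1).
have nf2 : forall x, x \in f2 -> (fq.+2 < x)%N.
  move=> x xf2; have /= h1 := allP a2 x xf2.
  have x1 : x != fq.+1 by apply: contraNneq Hn1 => <-; rewrite mem_cat in_cons xf2 !orbT.
  have x2 : x != fq.+2 by apply: contraNneq Hn2 => <-; rewrite mem_cat in_cons xf2 !orbT.
  clear -h1 x1 x2; lia.
have Hsort' : sorted ltn (f1 ++ fq.+2 :: f2).
  rewrite sorted_pairwise; last exact: ltn_trans.
  rewrite pairwise_cat pairwise_cons allrel_consr p1 p2 r12 !andbT /=.
  apply/andP; split; apply/allP => x /= xf; [have := nf1 x xf | have := nf2 x xf]; move=> h; clear -h; lia.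
have Hsort : sorted ltn (f1 ++ fq :: f2).
  rewrite sorted_pairwise; last exact: ltn_trans.
  by rewrite pairwise_cat pairwise_cons allrel_consr p1 p2 r12 a1 a2.
have Hall' : all (fun m => 0 < m <= M)%N (f1 ++ fq.+2 :: f2).
  move: Hall; rewrite !all_cat /= => /andP[-> /andP[_ ->]]; rewrite !andbT.
  clear -HfqM M3; apply/andP; split; lia.
have [i ei] : exists i : 'I_M, fq = i.+1.
  have h : (fq.-1 < M)%N by clear -fq0 fqM; lia.
  by exists (Ordinal h); rewrite /= prednK.
subst fq.
have jM : (i.+1 < M)%N by clear -HfqM M3; lia.
have kM : (i.+2 < M)%N by clear -HfqM M3; lia.
pose j := Ordinal jM; pose k := Ordinal kM.
have ij : i != j by rewrite -val_eqE /= neq_ltn ltnSn.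
have jk : j != k by rewrite -val_eqE /= neq_ltn ltnSn.
have ik : i != k by rewrite -val_eqE /= neq_ltn leqnSn.
have g1 : gam i.+1 != 0 by apply: Hg; clear -HfqM M3; lia.
have g2 : gam i.+2 != 0 by apply: Hg; clear -HfqM M3; lia.
pose a : {ffun bool -> C} := [ffun x : bool => - gam i.+1 * s i.+2 x +
   (if x then 2 * J i.+1 * s i.+2 false else 0)].
pose b : {ffun bool -> C} := [ffun z : bool => if z then s i.+3 true / gam i.+2
   else (s i.+3 false + 2 * J i.+2 * (s i.+3 true / gam i.+2)) / gam i.+2].
exists a, b; split; [|split].
- apply/negP => /eqP a0; apply: (negP (Hs i.+2 _)); first by clear -HfqM M3; lia.
  have hf : a false = 0 by rewrite a0 ffunE.
  have ht : a true = 0 by rewrite a0 ffunE.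
  rewrite /a !ffunE /= in hf ht.
  have sf : s i.+2 false = 0.
    by move/eqP: hf; rewrite addr0 mulNr oppr_eq0 mulf_eq0 (negbTE g1) /= => /eqP.
  have st : s i.+2 true = 0.
    by move/eqP: ht; rewrite sf mulr0 addr0 mulNr oppr_eq0 mulf_eq0 (negbTE g1) /= => /eqP.
  by apply/eqP/ffunP => x; rewrite ffunE; case: x.
- apply/negP => /eqP b0; apply: (negP (Hs i.+3 _)); first by clear -HfqM M3; lia.
  have hf : b false = 0 by rewrite b0 ffunE.
  have ht : b true = 0 by rewrite b0 ffunE.
  rewrite /b !ffunE /= in hf ht.
  have st : s i.+3 true = 0.
    by move/eqP: ht; rewrite mulf_eq0 invr_eq0 (negbTE g2) orbF => /eqP.
  have sf : s i.+3 false = 0.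
    by move/eqP: hf; rewrite st mul0r mulr0 addr0 mulf_eq0 invr_eq0 (negbTE g2) orbF => /eqP.
  by apply/eqP/ffunP => x; rewrite ffunE; case: x.
set s' := (fun m : nat => _).
rewrite (@xiE C M _ s Hsort Hall) (@xiE C M _ s' Hsort' Hall').
have -> : size (f1 ++ i.+3 :: f2) = size (f1 ++ i.+1 :: f2) by rewrite !size_cat.
set S := (-1) ^+ _.
set P := occ M (f1 ++ i.+1 :: f2).
set P' := occ M (f1 ++ i.+3 :: f2).
have Pi : P i by rewrite /P ffunE mem_cat mem_head orbT.
have Pj : ~~ P j by rewrite /P ffunE.
have Pk : ~~ P k by rewrite /P ffunE.
have P'k : P' k by rewrite /P' ffunE mem_cat mem_head orbT.
have P'j : ~~ P' j.
  rewrite /P' ffunE mem_cat in_cons /= !negb_or; apply/and3P; split.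
  - by apply/negP => /nf1; move: (nat_of_ord i) => n; clear -n; lia.
  - by move: (nat_of_ord i) => n; clear -n; lia.
  - by apply/negP => /nf2; move: (nat_of_ord i) => n; clear -n; lia.
have P'i : ~~ P' i.
  rewrite /P' ffunE mem_cat in_cons /= !negb_or; apply/and3P; split.
  - by apply/negP => /nf1; move: (nat_of_ord i) => n; clear -n; lia.
  - by move: (nat_of_ord i) => n; clear -n; lia.
  - by apply/negP => /nf2; move: (nat_of_ord i) => n; clear -n; lia.
have E2 : upd false k P' = upd false i P.
  apply/ffunP => m; rewrite !updE.
  case: (eqVneq m k) => [->|mk]; first by rewrite eq_sym (negbTE ik) (negbTE Pk).
  case: (eqVneq m i) => [->|mi] //; first by rewrite (negbTE P'i).
  have e1 : (m.+1 == i.+3) = (m == k) by [].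
  have e2 : (m.+1 == i.+1) = (m == i) by [].
  by rewrite /P /P' !ffunE !mem_cat !in_cons e1 e2 (negbTE mk) (negbTE mi).
have E3 : jw C (upd false i P) k = jw C (upd false i P) i.
  rewrite /jw; congr (_ ^+ _); apply: eq_card => m; rewrite !inE !updE.
  case: (eqVneq m i) => [->|mi]; first by rewrite !andbF.
  case: (eqVneq m j) => [->|mj]; first by rewrite (negbTE Pj) !andbF.
  have mi' : (nat_of_ord m != nat_of_ord i) := mi.
  have mj' : (nat_of_ord m != (nat_of_ord i).+1) := mj.
  have -> : (m < k)%N = (m < i)%N.
    move: mi' mj'; rewrite /=; move: (nat_of_ord m) (nat_of_ord i) => x y.
    clear; move=> h1 h2; apply/idP/idP; lia.
  by [].
rewrite /hR /hL (ltn_eqF jM).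
have -> : (i.+3 == 1)%N = false by [].
rewrite (@sigp_mk C M j) (@sigm_mk C M k).
have kj : k != j by rewrite eq_sym.
rewrite !(@hop C M i j P) // !(@hop C M k j P') //.
rewrite E2 E3 /=.
set c1 := _ * _.
have sj : s' j.+1 = a by rewrite /s' /= eqxx.
have sk : s' k.+1 = b by rewrite /s' /= neqS2 eqxx.
have Rs : forall g, Rp C M s' j k g = Rp C M s j k g.
  move=> g; apply: Rp_ext => m mj mk; rewrite /s'.
  have -> : (m.+1 == i.+2) = (m == j) by [].
  have -> : (m.+1 == i.+3) = (m == k) by [].
  by rewrite (negbTE mj) (negbTE mk).
apply/ffunP => y; rewrite /sc /mk !ffunE.
case: (y.1 == _); last by rewrite !mulr0 !addr0.
rewrite !(@Tsplit C M _ j k) // !Rp_updj !Rp_updk !Rs sj sk !updE eqxx (negbTE jk) (negbTE kj).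
set R := Rp C M s j k y.2.
case: (y.2 j); case: (y.2 k); rewrite /a /b !ffunE /= ?eqxx /=; field; exact: g2.
Qed.
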